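(* Let $T$ be a complete theory with monster model $\mathcal{U}$, $A\subseteq\mathcal{U}$ small, $\mu\in\mathfrak{M}_x(\mathcal{U})$, $\nu\in\mathfrak{M}_y(\mathcal{U})$, and suppose $\lambda\in\mathfrak{M}_{xy}(A)$ witnesses $\mu\geq_{\mathbb{E},A}\nu$. Then for any $\omega\in\operatorname{E}(\lambda,\mu)$, any $\varphi(y)\in\mathcal{L}_y(\mathcal{U})$ and any $\epsilon>0$, there exist $\gamma^-(x,y),\gamma^+(x,y)\in\mathbb{B}_{xy}(A)$ such that (1) $\gamma^-(x,y)\subseteq(\varphi(y)\wedge x=x)\subseteq\gamma^+(x,y)$; (2) $\omega(\gamma^+(x,y))-\omega(\gamma^-(x,y))<\epsilon$; (3) $|\omega(\gamma^{\dagger}(x,y))-\nu(\varphi(y))|<\epsilon$ for $\dagger\in\{+,-\}$.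
   Context: For $B\subseteq\mathcal{U}$, $\mathcal{L}_x(B)$ is the Boolean algebra of formulas in $x$ with parameters from $B$ modulo $T$, identified with $B$-definable sets, and embedded in $\mathcal{L}_{xy}(B)$ via $\varphi(x)\mapsto\varphi(x)\wedge y=y$; $\mathfrak{M}_x(B)$ is the set of finitely additive probability measures on $\mathcal{L}_x(B)$. For $\omega\in\mathfrak{M}_{xy}(B)$, $\pi_x(\omega)(\varphi(x))=\omega(\varphi(x)\wedge y=y)$ (similarly $\pi_y$); $\omega|_C$ is restriction. $\operatorname{E}(\lambda,\mu)=\{\omega\in\mathfrak{M}_{xy}(\mathcal{U}):\omega|_A=\lambda,\pi_x(\omega)=\mu\}$. $\lambda$ witnesses $\mu\geq_{\mathbb{E},A}\nu$ means $\pi_x(\lambda)=\mu|_A$ and $\pi_y(\omega)=\nu$ for all $\omega\in\operatorname{E}(\lambda,\mu)$. $\mathbb{B}_{xy}(A)$ is the Boolean subalgebra of $\mathcal{L}_{xy}(\mathcal{U})$ generated by $\{\varphi(x)\wedge y=y:\varphi(x)\in\mathcal{L}_x(\mathcal{U})\}\cup\mathcal{L}_{xy}(A)$. *)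

(* Defs.v *)
From Stdlib Require Import Reals List.
From Stdlib Require Fin.
Set Implicit Arguments.
Open Scope R_scope.

Record Language := {
  Fsym : Type; farity : Fsym -> nat;
  Rsym : Type; rarity : Rsym -> nat }.

Record Struc (L : Language) := {
  carrier :> Type;
  carrier_inh : inhabited carrier;
  funM : forall f : Fsym L, (Fin.t (farity L f) -> carrier) -> carrier;
  relM : forall r : Rsym L, (Fin.t (rarity L r) -> carrier) -> Prop }.

Inductive term (L : Language) (M : Type) (V : Type) : Type :=
| tvar : V -> term L M V
| tpar : M -> term L M V
| tapp : forall f : Fsym L, (Fin.t (farity L f) -> term L M V) -> term L M V.

Inductive form (L : Language) (M : Type) : Type -> Type :=
| feq : forall V, term L M V -> term L M V -> form L M V
| frel : forall V (r : Rsym L), (Fin.t (rarity L r) -> term L M V) -> form L M V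
| fneg : forall V, form L M V -> form L M V
| fand : forall V, form L M V -> form L M V -> form L M V
| fex : forall V, form L M (option V) -> form L M V.

Arguments tvar {L M V}. Arguments tpar {L M V}. Arguments tapp {L M V}.
Arguments feq {L M V}. Arguments frel {L M V}. Arguments fneg {L M V}.
Arguments fand {L M V}. Arguments fex {L M V}.

Definition scons {V M : Type} (a : M) (v : V -> M) : option V -> M :=
  fun o => match o with Some x => v x | None => a end.

Fixpoint teval {L} (U : Struc L) {V} (v : V -> U) (t : term L U V) : U :=
  match t with
  | tvar x => v x
  | tpar c => c
  | tapp f args => funM U f (fun i => teval U v (args i))
  end.

Fixpoint sat {L} (U : Struc L) {V} (phi : form L U V) : (V -> U) -> Prop :=
  match phi with
  | feq t1 t2 => fun v => teval U v t1 = teval U v t2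
  | frel r args => fun v => relM U r (fun i => teval U v (args i))
  | fneg p => fun v => ~ sat U p v
  | fand p q => fun v => sat U p v /\ sat U q v
  | fex p => fun v => exists a : U, sat U p (scons a v)
  end.

Fixpoint tparams_in {L M V} (B : M -> Prop) (t : term L M V) : Prop :=
  match t with
  | tvar _ => True
  | tpar c => B c
  | tapp f args => forall i, tparams_in B (args i)
  end.

Fixpoint params_in {L M V} (B : M -> Prop) (phi : form L M V) : Prop :=
  match phi with
  | feq t1 t2 => tparams_in B t1 /\ tparams_in B t2
  | frel r args => forall i, tparams_in B (args i)
  | fneg p => params_in B p
  | fand p q => params_in B p /\ params_in B q
  | fex p => params_in B p
  end.

Fixpoint tmap_params {L M V} (g : M -> M) (t : term L M V) : term L M V :=
  match t with
  | tvar x => tvar x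
  | tpar c => tpar (g c)
  | tapp f args => tapp f (fun i => tmap_params g (args i))
  end.

Fixpoint map_params {L M V} (g : M -> M) (phi : form L M V) : form L M V :=
  match phi with
  | feq t1 t2 => feq (tmap_params g t1) (tmap_params g t2)
  | frel r args => frel r (fun i => tmap_params g (args i))
  | fneg p => fneg (map_params g p)
  | fand p q => fand (map_params g p) (map_params g q)
  | fex p => fex (map_params g p)
  end.

Definition injective {X Y : Type} (f : X -> Y) := forall a b, f a = f b -> a = b.

Definition small {M : Type} (K : Type) (B : M -> Prop) : Prop :=
  (exists f : {a | B a} -> K, injective f) /\
  ~ (exists g : K -> {a | B a}, injective g).

Definition saturated {L} (K : Type) (U : Struc L) : Prop :=
  forall (C : U -> Prop) (p : form L U unit -> Prop),
    small K C ->
    (forall phi, p phi -> params_in C phi) ->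
    (forall l : list (form L U unit), (forall phi, In phi l -> p phi) ->
       exists a : U, forall phi, In phi l -> sat U phi (fun _ => a)) ->
    exists a : U, forall phi, p phi -> sat U phi (fun _ => a).

Definition automorphism {L} (U : Struc L) (s : U -> U) : Prop :=
  (exists s' : U -> U, (forall a, s' (s a) = a) /\ (forall a, s (s' a) = a)) /\
  (forall f args, s (funM U f args) = funM U f (fun i => s (args i))) /\
  (forall r args, relM U r args <-> relM U r (fun i => s (args i))).

Definition elementary_on {L} (U : Struc L) (C : U -> Prop) (g : U -> U) : Prop :=
  forall phi : form L U Empty_set, params_in C phi ->
    (sat U phi (fun e => match e with end) <->
     sat U (map_params g phi) (fun e => match e with end)).

Definition homogeneous {L} (K : Type) (U : Struc L) : Prop :=
  forall (C : U -> Prop) (g : U -> U), small K C -> elementary_on U C g ->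
    exists s, automorphism U s /\ forall c, C c -> s c = g c.

Definition monster {L} (K : Type) (U : Struc L) : Prop :=
  saturated K U /\ homogeneous K U.

(* L_V(B): subsets of U^V definable with parameters from B (T = Th(U)) *)
Definition Ldef {L} (U : Struc L) (V : Type) (B : U -> Prop) (S : (V -> U) -> Prop) : Prop :=
  exists phi : form L U V, params_in B phi /\ forall a, S a <-> sat U phi a.
Arguments Ldef {L} U V B S.

Definition allU {M : Type} : M -> Prop := fun _ => True.

Definition fa_prob {Z : Type} (D : (Z -> Prop) -> Prop) (m : (Z -> Prop) -> R) : Prop :=
  (forall S, D S -> 0 <= m S) /\
  m (fun _ => True) = 1 /\
  (forall S T, D S -> D T -> (forall z, S z -> T z -> False) ->
     m (fun z => S z \/ T z) = m S + m T).

Definition keisler {L} (U : Struc L) (V : Type) (B : U -> Prop) (m : ((V -> U) -> Prop) -> R) :=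
  fa_prob (Ldef U V B) m.
Arguments keisler {L} U V B m.

(* x = (x_1..x_n) and y = (y_1..y_m) are disjoint tuples: xy variables are Fin.t n + Fin.t m *)
Definition cyl_x {M X Y : Type} (S : (X -> M) -> Prop) : (X + Y -> M) -> Prop :=
  fun c => S (fun i => c (inl i)).          (* phi(x) /\ y = y *)
Definition cyl_y {M X Y : Type} (S : (Y -> M) -> Prop) : (X + Y -> M) -> Prop :=
  fun c => S (fun j => c (inr j)).          (* phi(y) /\ x = x *)

Definition Eset {L} (U : Struc L) (X Y : Type) (A : U -> Prop)
    (lambda : ((X + Y -> U) -> Prop) -> R) (mu : ((X -> U) -> Prop) -> R)
    (omega : ((X + Y -> U) -> Prop) -> R) : Prop :=
  keisler U (X + Y) allU omega /\
  (forall S, Ldef U (X + Y) A S -> omega S = lambda S) /\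
  (forall S, Ldef U X allU S -> omega (cyl_x S) = mu S).

Definition witnesses {L} (U : Struc L) (X Y : Type) (A : U -> Prop)
    (lambda : ((X + Y -> U) -> Prop) -> R) (mu : ((X -> U) -> Prop) -> R)
    (nu : ((Y -> U) -> Prop) -> R) : Prop :=
  (forall S, Ldef U X A S -> lambda (cyl_x S) = mu S) /\
  (forall omega, Eset U A lambda mu omega ->
     forall S, Ldef U Y allU S -> omega (cyl_y S) = nu S).

Inductive bgen {Z : Type} (G : (Z -> Prop) -> Prop) : (Z -> Prop) -> Prop :=
| bg_base : forall S, G S -> bgen G S
| bg_top : bgen G (fun _ => True)
| bg_compl : forall S, bgen G S -> bgen G (fun z => ~ S z)
| bg_union : forall S T, bgen G S -> bgen G T -> bgen G (fun z => S z \/ T z).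

Definition Bxy {L} (U : Struc L) (X Y : Type) (A : U -> Prop) : ((X + Y -> U) -> Prop) -> Prop :=
  bgen (fun S => (exists T, Ldef U X allU T /\ forall c, S c <-> cyl_x T c)
                 \/ Ldef U (X + Y) A S).

(* Main.v *)
From Stdlib Require Import Reals Lra Classical ClassicalEpsilon FunctionalExtensionality PropExtensionality.
Require Import Defs.
From Stdlib Require Fin.
From mathcomp Require classical_sets.
Lemma zorn_wrap (T : Type) (P : (T -> Prop) -> Prop) :
 (forall F : (T -> Prop) -> Prop, (forall X, F X -> P X) ->
   (forall X Y, F X -> F Y -> (forall t, X t -> Y t) \/ (forall t, Y t -> X t)) ->
   P (fun t => exists X, F X /\ X t)) ->
 exists A, P A /\ forall B, (forall t, A t -> B t) -> (exists t, B t /\ ~ A t) -> ~ P B.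
Proof.
intros H.
destruct (@classical_sets.Zorn_bigcup T P) as [A [PA HA]].
- intros F HF Ht.
  assert (E : classical_sets.bigcup F (fun X => X) = (fun t => exists X, F X /\ X t)).
  { apply boolp.funext; intro t; apply boolp.propext; unfold classical_sets.bigcup; simpl.
    split; [intros [X h1 h2]; eauto | intros [X [h1 h2]]; exists X; auto]. }
  rewrite E. apply H; auto.
- exists A; split; auto. intros B h1 [t [h2 h3]] PB. apply (HA B); auto.
  unfold classical_sets.proper, classical_sets.subset. split; [exact h1| intro h; apply h3; apply h; exact h2].
Qed.

Open Scope R_scope.

Lemma sext {X} (P Q : X -> Prop) : (forall z, P z <-> Q z) -> P = Q.
Proof. intro H; apply functional_extensionality; intro z; apply propositional_extensionality; auto. Qed.

Section Meas.
Variable Z : Type.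
Definition sU (S T : Z -> Prop) := fun z => S z \/ T z.
Definition sC (S : Z -> Prop) := fun z => ~ S z.
Definition sI (S T : Z -> Prop) := fun z => S z /\ T z.
Definition sD (S T : Z -> Prop) := fun z => S z /\ ~ T z.
Definition sT : Z -> Prop := fun _ => True.
Definition s0 : Z -> Prop := fun _ => False.
Definition disj (S T : Z -> Prop) := forall z, S z -> T z -> False.
Definition sub (S T : Z -> Prop) := forall z, S z -> T z.

Definition BA (C : (Z -> Prop) -> Prop) :=
  C sT /\ (forall S, C S -> C (sC S)) /\ (forall S T, C S -> C T -> C (sU S T)).
Definition addv (C : (Z -> Prop) -> Prop) (f : (Z -> Prop) -> R) :=
  forall S T, C S -> C T -> disj S T -> f (sU S T) = f S + f T.

Variable C : (Z -> Prop) -> Prop.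
Hypothesis HC : BA C.

Lemma BA_T : C sT. Proof. apply HC. Qed.
Lemma BA_C S : C S -> C (sC S). Proof. apply HC. Qed.
Lemma BA_U S T : C S -> C T -> C (sU S T). Proof. apply HC. Qed.
Lemma BA_0 : C s0.
Proof. replace s0 with (sC sT). apply BA_C, BA_T. apply sext; unfold sC, sT, s0; tauto. Qed.
Lemma BA_I S T : C S -> C T -> C (sI S T).
Proof. intros. replace (sI S T) with (sC (sU (sC S) (sC T))).
  apply BA_C, BA_U; apply BA_C; auto.
  apply sext; unfold sC, sU, sI; intro z; tauto. Qed.
Lemma BA_D S T : C S -> C T -> C (sD S T).
Proof. intros. replace (sD S T) with (sI S (sC T)). apply BA_I; auto. apply BA_C; auto.
  apply sext; unfold sI, sC, sD; tauto. Qed.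

Arguments BA_C {S}. Arguments BA_U {S T}. Arguments BA_I {S T}. Arguments BA_D {S T}.
Section Add.
Variable f : (Z -> Prop) -> R.
Hypothesis Hf : addv C f.
Lemma add_0 : f s0 = 0.
Proof. assert (E : sU s0 s0 = s0) by (apply sext; unfold sU, s0; tauto).
  pose proof (Hf s0 s0 BA_0 BA_0) as H. rewrite E in H. assert (f s0 = f s0 + f s0).
  apply H. unfold disj, s0; tauto. lra. Qed.
Lemma add_split S T : C S -> C T -> f S = f (sI S T) + f (sD S T).
Proof. intros. replace S with (sU (sI S T) (sD S T)) at 1.
  apply Hf. apply BA_I; auto. apply BA_D; auto. unfold disj, sI, sD; tauto.
  apply sext; unfold sU, sI, sD; intro z; tauto. Qed.
Lemma add_mod S T : C S -> C T -> f (sU S T) + f (sI S T) = f S + f T.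
Proof. intros. replace (sU S T) with (sU S (sD T S)).
  rewrite Hf; auto. rewrite (add_split T S); auto.
  replace (sI S T) with (sI T S). lra. apply sext; unfold sI; tauto.
  apply BA_D; auto. unfold disj, sD; tauto.
  apply sext; unfold sU, sD; intro z; tauto. Qed.
Lemma add_compl S : C S -> f (sC S) = f sT - f S.
Proof. intros. replace sT with (sU S (sC S)). rewrite Hf; auto. lra. apply BA_C; auto.
  unfold disj, sC; tauto. apply sext; unfold sU, sC, sT; intro z; tauto. Qed.
End Add.
Arguments add_0 {f}. Arguments add_split {f}. Arguments add_mod {f}. Arguments add_compl {f}.

Variable m : (Z -> Prop) -> R.
Hypothesis Hm : fa_prob C m.

Lemma m_add : addv C m. Proof. intros S T h1 h2 h3. apply Hm; auto. Qed.
Lemma m_nn S : C S -> 0 <= m S. Proof. apply Hm. Qed.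
Arguments m_nn {S}.
Lemma m_T : m sT = 1. Proof. apply Hm. Qed.
Lemma m_mono S T : C S -> C T -> sub S T -> m S <= m T.
Proof. intros. rewrite (add_split m_add T S); auto.
  replace (sI T S) with S. pose proof (m_nn (BA_D H0 H)). lra.
  apply sext; unfold sI; intro z; split; auto; tauto. Qed.
Arguments m_mono {S T}.
Lemma m_le1 S : C S -> m S <= 1.
Proof. intros; rewrite <- m_T; apply m_mono; auto. apply BA_T. intros z _; exact I. Qed.
Lemma m_subadd S T : C S -> C T -> m (sU S T) <= m S + m T.
Proof. intros. pose proof (add_mod m_add S T H H0). pose proof (m_nn (BA_I H H0)). lra. Qed.

Arguments m_subadd {S T}. Arguments m_le1 {S}.
Definition outS (E : Z -> Prop) (r : R) := exists c, C c /\ sub E c /\ r = - m c.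
Definition out (E : Z -> Prop) := - epsilon (inhabits 0) (is_lub (outS E)).

Lemma out_lub E : is_lub (outS E) (- out E).
Proof. unfold out. rewrite Ropp_involutive. apply epsilon_spec.
  destruct (completeness (outS E)) as [l Hl].
  - exists 0. intros r [c [h1 [h2 ->]]]. pose proof (m_nn h1). lra.
  - exists (- m sT). exists sT; split; [apply BA_T|split; auto]. intros z _; exact I.
  - exists l; exact Hl. Qed.
Lemma out_le E c : C c -> sub E c -> out E <= m c.
Proof. intros. destruct (out_lub E) as [H1 _]. assert (- m c <= - out E).
  apply H1. exists c; auto. lra. Qed.
Lemma out_ge E r : (forall c, C c -> sub E c -> r <= m c) -> r <= out E.
Proof. intros. destruct (out_lub E) as [_ H2]. assert (- out E <= - r).
  apply H2. intros x [c [h1 [h2 ->]]]. pose proof (H c h1 h2). lra. lra. Qed.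
Lemma out_approx E eps : 0 < eps -> exists c, C c /\ sub E c /\ m c < out E + eps.
Proof. intros. apply NNPP; intro N. assert (out E + eps <= out E). apply out_ge.
  intros c h1 h2. apply Rnot_lt_le. intro h3. apply N. exists c; auto. lra. Qed.
Lemma out_C c : C c -> out c = m c.
Proof. intros. apply Rle_antisym. apply out_le; auto. intros z; auto.
  apply out_ge. intros; apply m_mono; auto. Qed.
Lemma out_nn E : 0 <= out E.
Proof. apply out_ge. intros; apply m_nn; auto. Qed.

Variable d : Z -> Prop.
Definition rho c := out (sI c d).

Lemma rho_add : addv C rho.
Proof. intros c1 c2 h1 h2 hd. unfold rho. apply Rle_antisym.
  - apply le_epsilon. intros eps heps.
    destruct (out_approx (sI c1 d) (eps/2)) as [e1 [k1 [k2 k3]]]. lra.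
    destruct (out_approx (sI c2 d) (eps/2)) as [e2 [k4 [k5 k6]]]. lra.
    assert (out (sI (sU c1 c2) d) <= m (sU e1 e2)). apply out_le. apply BA_U; auto.
    intros z [[a|a] b]; [left; apply k2 | right; apply k5]; split; auto.
    pose proof (m_subadd k1 k4). lra.
  - apply out_ge. intros e he hs.
    assert (out (sI c1 d) <= m (sI e c1)). apply out_le. apply BA_I; auto.
      intros z [a b]; split; auto. apply hs; split; auto; left; auto.
    assert (out (sI c2 d) <= m (sI e c2)). apply out_le. apply BA_I; auto.
      intros z [a b]; split; auto. apply hs; split; auto; right; auto.
    assert (m (sU (sI e c1) (sI e c2)) = m (sI e c1) + m (sI e c2)).
      apply m_add; try apply BA_I; auto. intros z [_ a] [_ b]; eapply hd; eauto.
    assert (m (sU (sI e c1) (sI e c2)) <= m e). apply m_mono; auto.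
      apply BA_U; apply BA_I; auto. intros z [[a _]|[a _]]; auto.
    lra. Qed.
Lemma rho_le c : C c -> rho c <= m c.
Proof. intros; apply out_le; auto. intros z [a _]; auto. Qed.
Lemma rho_nn c : 0 <= rho c. Proof. apply out_nn. Qed.
Lemma rho_in c : C c -> sub c d -> rho c = m c.
Proof. intros. unfold rho. replace (sI c d) with c. apply out_C; auto.
  apply sext; unfold sI; intro z; split; auto; tauto. Qed.
Lemma rho_0 c : C c -> (forall z, c z -> d z -> False) -> rho c = 0.
Proof. intros. unfold rho. replace (sI c d) with s0. rewrite out_C. apply (add_0 m_add).
  apply BA_0. apply sext; unfold sI, s0; intro z; split; try tauto. intros [a b]; eauto. Qed.

Lemma key c2 c2' : C c2 -> C c2' -> (forall z, c2 z -> ~ d z -> c2' z) ->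
  m c2 - rho c2 = m (sI c2 c2') - rho (sI c2 c2').
Proof. intros. rewrite (add_split m_add c2 c2'); auto. rewrite (add_split rho_add c2 c2'); auto.
  rewrite (rho_in _ (BA_D H H0)). lra. intros z [a b]. apply NNPP; intro; apply b; auto. Qed.

Definition Gd (p : (Z -> Prop) * R) := exists c1 c2, C c1 /\ C c2 /\
  fst p = sU (sI c1 d) (sD c2 d) /\ snd p = rho c1 + m c2 - rho c2.


Definition good (D : (Z -> Prop) -> Prop) (G : (Z -> Prop) * R -> Prop) :=
  (forall E a b, G (E,a) -> G (E,b) -> a = b) /\
  (forall E a, G (E,a) -> D E) /\
  (forall E a, G (E,a) -> 0 <= a) /\
  G (sT, 1) /\
  (forall E a, G (E,a) -> G (sC E, 1 - a)) /\
  (forall E F a b, G (E,a) -> G (F,b) -> exists c, G (sU E F, c)) /\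
  (forall E F a b, G (E,a) -> G (F,b) -> disj E F -> G (sU E F, a + b)).

Lemma Gd_ext c : C c -> Gd (c, m c).
Proof. intros. exists c, c. repeat split; auto. simpl. apply sext; unfold sU, sI, sD; intro z; split.
  intro; destruct (classic (d z)); tauto. tauto. simpl; lra. Qed.

Lemma Gd_d : Gd (d, out d).
Proof. exists sT, s0. repeat split; [apply BA_T|apply BA_0| |].
  simpl. apply sext; unfold sU, sI, sD, sT, s0; intro z; tauto.
  simpl. unfold rho at 1. replace (sI sT d) with d. rewrite (add_0 m_add).
  rewrite (rho_0 _ BA_0). lra. unfold s0; tauto. apply sext; unfold sI, sT; tauto. Qed.

Lemma Gd_func c1 c2 c1' c2' : C c1 -> C c2 -> C c1' -> C c2' ->
  sU (sI c1 d) (sD c2 d) = sU (sI c1' d) (sD c2' d) ->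
  rho c1 + m c2 - rho c2 = rho c1' + m c2' - rho c2'.
Proof. intros h1 h2 h3 h4 E.
  assert (E' : forall z, sU (sI c1 d) (sD c2 d) z <-> sU (sI c1' d) (sD c2' d) z).
  { intro z; rewrite E; tauto. }
  unfold sU, sI, sD in E'.
  assert (rho c1 = rho c1'). { unfold rho. f_equal. apply sext; intro z; unfold sI.
    specialize (E' z). tauto. }
  assert (K1 : m c2 - rho c2 = m (sI c2 c2') - rho (sI c2 c2')).
  { apply key; auto. intros z a b. specialize (E' z); tauto. }
  assert (K2 : m c2' - rho c2' = m (sI c2' c2) - rho (sI c2' c2)).
  { apply key; auto. intros z a b. specialize (E' z); tauto. }
  replace (sI c2' c2) with (sI c2 c2') in K2. lra.
  apply sext; unfold sI; tauto. Qed.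

Variable D : (Z -> Prop) -> Prop.
Hypothesis HD : BA D.
Hypothesis CD : forall c, C c -> D c.
Hypothesis Dd : D d.
Lemma DU S T : D S -> D T -> D (sU S T). Proof. apply HD. Qed.
Lemma DI S T : D S -> D T -> D (sI S T).
Proof. intros. replace (sI S T) with (sC (sU (sC S) (sC T))).
  apply HD, DU; apply HD; auto.
  apply sext; unfold sC, sU, sI; intro z; tauto. Qed.
Lemma DD S T : D S -> D T -> D (sD S T).
Proof. intros. replace (sD S T) with (sI S (sC T)). apply DI; auto. apply HD; auto.
  apply sext; unfold sI, sC, sD; tauto. Qed.

Lemma Gd_good : good D Gd.
Proof.
  split; [|split; [|split; [|split; [|split; [|split]]]]].
  - intros E a b [c1 [c2 [h1 [h2 [e1 e2]]]]] [c1' [c2' [h1' [h2' [e1' e2']]]]].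
    simpl in *. subst. apply Gd_func; auto.
  - intros E a [c1 [c2 [h1 [h2 [e1 e2]]]]]. simpl in *; subst.
    apply DU; [apply DI|apply DD]; auto.
  - intros E a [c1 [c2 [h1 [h2 [e1 e2]]]]]. simpl in *; subst.
    pose proof (rho_nn c1). pose proof (rho_le _ h2). lra.
  - exists sT, sT. repeat split; try apply BA_T. simpl.
    apply sext; unfold sU, sI, sD, sT; intro z; split; auto. intros _; destruct (classic (d z)); tauto.
    simpl. rewrite m_T; lra.
  - intros E a [c1 [c2 [h1 [h2 [e1 e2]]]]]. simpl in *; subst.
    exists (sC c1), (sC c2). repeat split; try (apply BA_C; auto). simpl.
    apply sext; unfold sC, sU, sI, sD; intro z; tauto.
    simpl. rewrite (add_compl rho_add c1 h1). rewrite (add_compl rho_add c2 h2).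
    rewrite (add_compl m_add c2 h2). rewrite m_T. lra.
  - intros E F a b [c1 [c2 [h1 [h2 [e1 e2]]]]] [c1' [c2' [h1' [h2' [e1' e2']]]]].
    simpl in *; subst.
    eexists. exists (sU c1 c1'), (sU c2 c2'). repeat split; try (apply BA_U; auto). simpl.
    apply sext; unfold sU, sI, sD; intro z; tauto.
  - intros E F a b [c1 [c2 [h1 [h2 [e1 e2]]]]] [c1' [c2' [h1' [h2' [e1' e2']]]]] hd.
    simpl in *; subst.
    exists (sU c1 c1'), (sU c2 c2'). repeat split; try (apply BA_U; auto). simpl.
    apply sext; unfold sU, sI, sD; intro z; tauto.
    simpl.
    pose proof (add_mod rho_add c1 c1' h1 h1') as M1.
    pose proof (add_mod rho_add c2 c2' h2 h2') as M2.
    pose proof (add_mod m_add c2 c2' h2 h2') as M3.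
    rewrite (rho_0 _ (BA_I h1 h1')) in M1.
    2:{ intros z [a b] c. apply (hd z); unfold sU, sI, sD; left; auto. }
    rewrite (rho_in _ (BA_I h2 h2')) in M2.
    2:{ intros z [a b]. apply NNPP; intro c. apply (hd z); unfold sU, sI, sD; right; auto. }
    lra.
Qed.

End Meas.



Section Ext.
Variable Z : Type.
Variable D : (Z -> Prop) -> Prop.
Hypothesis HD : BA Z D.

Definition domG (G : (Z -> Prop) * R -> Prop) E := exists a, G (E,a).
Definition valG (G : (Z -> Prop) * R -> Prop) E := epsilon (inhabits 0) (fun a => G (E,a)).

Lemma val_spec G E a : good Z D G -> G (E,a) -> valG G E = a.
Proof. intros Hg h. destruct Hg as [F _]. apply (F E). apply (epsilon_spec (inhabits 0) (fun a => G (E,a))).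
  exists a; auto. auto. Qed.
Lemma val_in G E : domG G E -> G (E, valG G E).
Proof. intros [a h]. apply (epsilon_spec (inhabits 0) (fun a => G (E,a))). exists a; auto. Qed.

Lemma good_BA G : good Z D G -> BA Z (domG G).
Proof. intros Hg. destruct Hg as [_ [_ [_ [h4 [h5 [h6 _]]]]]].
  split; [|split]. exists 1; auto. intros S [a h]; eexists; eauto.
  intros S T [a h] [b h']. destruct (h6 _ _ _ _ h h') as [c hc]. exists c; auto. Qed.

Lemma good_fap G : good Z D G -> fa_prob (domG G) (valG G).
Proof. intros Hg. pose proof Hg as Hg'. destruct Hg as [_ [_ [h3 [h4 [h5 [h6 h7]]]]]].
  split; [|split].
  - intros S hS. apply (h3 S). apply val_in; auto.
  - apply val_spec; auto.
  - intros S T hS hT hd. apply val_spec; auto. apply h7; auto; apply val_in; auto. Qed.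

Lemma good_D G : good Z D G -> forall c, domG G c -> D c.
Proof. intros Hg c [a h]. destruct Hg as [_ [h2 _]]. eapply h2; eauto. Qed.

Lemma chain_good G (F : ((Z -> Prop) * R -> Prop) -> Prop) :
  good Z D G ->
  (forall X, F X -> good Z D (fun p => X p \/ G p)) ->
  (forall X Y, F X -> F Y -> (forall t, X t -> Y t) \/ (forall t, Y t -> X t)) ->
  good Z D (fun p => (exists X, F X /\ X p) \/ G p).
Proof.
  intros HG HF Ht.
  set (Un := fun p => (exists X, F X /\ X p) \/ G p).
  assert (TP : forall p1 p2, Un p1 -> Un p2 -> exists H, good Z D H /\ (forall p, H p -> Un p) /\ H p1 /\ H p2).
  { intros p1 p2 [[X1 [f1 x1]]|g1] [[X2 [f2 x2]]|g2].
    - destruct (Ht X1 X2 f1 f2) as [s|s].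
      + exists (fun p => X2 p \/ G p). split; auto. split. intros p [x|x]; [left; eauto|right; auto]. auto.
      + exists (fun p => X1 p \/ G p). split; auto. split. intros p [x|x]; [left; eauto|right; auto]. auto.
    - exists (fun p => X1 p \/ G p). split; auto. split. intros p [x|x]; [left; eauto|right; auto]. auto.
    - exists (fun p => X2 p \/ G p). split; auto. split. intros p [x|x]; [left; eauto|right; auto]. auto.
    - exists G. split; auto. split. intros p x; right; auto. auto. }
  fold Un. split; [|split; [|split; [|split; [|split; [|split]]]]].
  - intros E a b h1 h2. destruct (TP _ _ h1 h2) as [H [Hg [Hs [k1 k2]]]].
    destruct Hg as [F1 _]. eapply F1; eauto.
  - intros E a h1. destruct (TP _ _ h1 h1) as [H [Hg [Hs [k1 k2]]]].
    destruct Hg as [_ [F2 _]]. eapply F2; eauto.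
  - intros E a h1. destruct (TP _ _ h1 h1) as [H [Hg [Hs [k1 k2]]]].
    destruct Hg as [_ [_ [F3 _]]]. eapply F3; eauto.
  - right. apply HG.
  - intros E a h1. destruct (TP _ _ h1 h1) as [H [Hg [Hs [k1 k2]]]].
    destruct Hg as [_ [_ [_ [_ [F5 _]]]]]. apply Hs. apply F5; auto.
  - intros E F0 a b h1 h2. destruct (TP _ _ h1 h2) as [H [Hg [Hs [k1 k2]]]].
    destruct Hg as [_ [_ [_ [_ [_ [F6 _]]]]]]. destruct (F6 _ _ _ _ k1 k2) as [c hc].
    exists c; apply Hs; auto.
  - intros E F0 a b h1 h2 hd. destruct (TP _ _ h1 h2) as [H [Hg [Hs [k1 k2]]]].
    destruct Hg as [_ [_ [_ [_ [_ [_ F7]]]]]]. apply Hs; apply F7; auto.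
Qed.

Lemma ext G : good Z D G -> exists m', fa_prob D m' /\ forall E a, G (E,a) -> m' E = a.
Proof.
  intros HG.
  destruct (@zorn_wrap _ (fun X => good Z D (fun p => X p \/ G p))) as [A [PA HA]].
  { intros F HF Ht. apply chain_good; auto. }
  pose (H := fun p : (Z -> Prop) * R => A p \/ G p). change (good Z D H) in PA.
  assert (Dsub : forall E, D E -> domG H E).
  { intros d Dd. apply NNPP; intro Nd.
    pose (Gd' := Gd Z (domG H) (valG H) d).
    assert (Hgd : good Z D Gd').
    { apply Gd_good; auto. apply good_BA; auto. apply good_fap; auto. apply good_D; auto. }
    apply (HA Gd').
    - intros p hp. destruct p as [E a]. assert (hH : H (E,a)) by (left; auto).
      rewrite <- (val_spec H E a PA hH). apply Gd_ext. exists a; auto.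
    - exists (d, out Z (domG H) (valG H) d). split. apply Gd_d. apply good_BA; auto. apply good_fap; auto.
      intro h. apply Nd. eexists. left. exact h.
    - replace (fun p => Gd' p \/ G p) with Gd'. auto.
      apply sext. intros [E a]. split; auto. intros [h|h]; auto.
      assert (hH : H (E,a)) by (right; auto).
      rewrite <- (val_spec H E a PA hH). apply Gd_ext. exists a; auto. }
  exists (valG H). split.
  - pose proof (good_fap H PA) as [f1 [f2 f3]]. split; [|split]; auto.
  - intros E a h. apply val_spec; auto. right; auto.
Qed.
End Ext.


Fixpoint tren {L M V W} (f : V -> W) (t : term L M V) : term L M W :=
  match t with
  | tvar x => tvar (f x)
  | tpar c => tpar c
  | tapp g args => tapp g (fun i => tren f (args i))
  end.

Fixpoint fren {L M V} (phi : form L M V) {struct phi} : forall W, (V -> W) -> form L M W :=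
  match phi in form _ _ V0 return forall W, (V0 -> W) -> form L M W with
  | @feq _ _ _ t1 t2 => fun W f => feq (tren f t1) (tren f t2)
  | @frel _ _ _ r args => fun W f => frel r (fun i => tren f (args i))
  | @fneg _ _ _ p => fun W f => fneg (fren p W f)
  | @fand _ _ _ p q => fun W f => fand (fren p W f) (fren q W f)
  | @fex _ _ _ p => fun W f => fex (fren p (option W) (option_map f))
  end.

Lemma teval_ren {L} (U : Struc L) V W (f : V -> W) (v : W -> U) (t : term L U V) :
  teval U v (tren f t) = teval U (fun x => v (f x)) t.
Proof. induction t; simpl; auto. f_equal. apply functional_extensionality; auto. Qed.

Lemma sat_ren {L} (U : Struc L) V (phi : form L U V) :
  forall W (f : V -> W) (v : W -> U), sat U (fren phi W f) v <-> sat U phi (fun x => v (f x)).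
Proof. induction phi; intros W f v; simpl.
  - rewrite !teval_ren; tauto.
  - assert (E : (fun i => teval U v (tren f (t i))) = (fun i => teval U (fun x => v (f x)) (t i))).
    { apply functional_extensionality; intro; apply teval_ren. }
    rewrite E; tauto.
  - rewrite IHphi; tauto.
  - rewrite IHphi1, IHphi2; tauto.
  - split; intros [a h]; exists a.
    + apply IHphi in h. replace (scons a (fun x => v (f x))) with (fun x => scons a v (option_map f x)); auto.
      apply functional_extensionality; intros [x|]; reflexivity.
    + apply IHphi. replace (fun x => scons a v (option_map f x)) with (scons a (fun x => v (f x))); auto.
      apply functional_extensionality; intros [x|]; reflexivity.
Qed.

Lemma tall {L M V} (t : term L M V) : tparams_in allU t.
Proof. induction t; simpl; auto; exact I. Qed.
Lemma fall {L M V} (phi : form L M V) : params_in allU phi.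
Proof. induction phi; simpl; auto using tall. Qed.

Section LD.
Variable L : Language.
Variable U : Struc L.
Variable V : Type.

Lemma Ldef_BA : BA (V -> U) (Ldef U V allU).
Proof. destruct (carrier_inh U) as [c0]. split; [|split].
  - exists (feq (tpar c0) (tpar c0)). split. apply fall. simpl; unfold sT; tauto.
  - intros S [p [_ h]]. exists (fneg p). split. apply fall. intro a; simpl; unfold sC; rewrite h; tauto.
  - intros S T [p [_ h]] [q [_ h']]. exists (fneg (fand (fneg p) (fneg q))). split. apply fall.
    intro a; simpl; unfold sU; rewrite h, h'; tauto.
Qed.

Lemma Ldef_ren W (f : V -> W) S : Ldef U V allU S -> Ldef U W allU (fun c => S (fun x => c (f x))).
Proof. intros [p [_ h]]. exists (fren p W f). split. apply fall. intro a. rewrite sat_ren. apply h. Qed.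

Lemma Ldef_all B S : Ldef U V B S -> Ldef U V allU S.
Proof. intros [p [_ h]]. exists p; split; auto. apply fall. Qed.
End LD.

Section Main.
Variables (L : Language) (U : Struc L) (A : U -> Prop) (n m : nat).
Let Z := (Fin.t n + Fin.t m -> U)%type.
Let D := Ldef U (Fin.t n + Fin.t m) allU.

Lemma Bxy_BA : BA Z (Bxy U A).
Proof. split; [|split]. apply bg_top. intros; apply bg_compl; auto. intros; apply bg_union; auto. Qed.

Lemma Bxy_D c : Bxy U A c -> D c.
Proof. pose proof (Ldef_BA L U (Fin.t n + Fin.t m)) as [h1 [h2 h3]].
  induction 1.
  - destruct H as [[T [hT e]]|h].
    + destruct (Ldef_ren L U _ (Fin.t n + Fin.t m) inl T hT) as [p [hp e']].
      exists p. split; auto. intro a. rewrite e. apply e'.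
    + eapply Ldef_all; eauto.
  - apply h1.
  - apply (h2 S); auto.
  - apply (h3 S T); auto.
Qed.
End Main.

Theorem proposition3p17 (L : Language) (U : Struc L) (K : Type)
  (HU : monster K U) (A : U -> Prop) (HA : small K A) (n m : nat)
  (mu : ((Fin.t n -> U) -> Prop) -> R) (nu : ((Fin.t m -> U) -> Prop) -> R)
  (lambda : ((Fin.t n + Fin.t m -> U) -> Prop) -> R) :
  keisler U (Fin.t n) allU mu ->
  keisler U (Fin.t m) allU nu ->
  keisler U (Fin.t n + Fin.t m) A lambda ->
  witnesses U A lambda mu nu ->
  forall omega : ((Fin.t n + Fin.t m -> U) -> Prop) -> R,
    Eset U A lambda mu omega ->
  forall phi : (Fin.t m -> U) -> Prop, Ldef U (Fin.t m) allU phi ->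
  forall eps : R, 0 < eps ->
  exists gm gp : (Fin.t n + Fin.t m -> U) -> Prop,
    Bxy U A gm /\ Bxy U A gp /\
    (forall c, gm c -> cyl_y phi c) /\ (forall c, cyl_y phi c -> gp c) /\
    omega gp - omega gm < eps /\
    Rabs (omega gp - nu phi) < eps /\ Rabs (omega gm - nu phi) < eps.
Proof.
  intros Hmu Hnu Hlam [W1 W2] omega HE phi Hphi eps Heps.
  set (Z := (Fin.t n + Fin.t m -> U)%type).
  set (D := Ldef U (Fin.t n + Fin.t m) allU).
  set (C := Bxy U A).
  assert (HD : BA Z D) by apply Ldef_BA.
  assert (HC : BA Z C) by apply Bxy_BA.
  assert (CD : forall c, C c -> D c) by apply Bxy_D.
  assert (HomD : fa_prob D omega) by apply HE.
  assert (HomC : fa_prob C omega).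
  { destruct HomD as [f1 [f2 f3]]. split; [|split]; auto. }
  assert (Hext : forall d, D d -> exists om', Eset U A lambda mu om' /\
            om' d = out Z C omega d /\ fa_prob D om').
  { intros d Dd.
    destruct (ext Z D HD (Gd Z C omega d) (Gd_good Z C HC omega HomC d D HD CD Dd)) as [om' [F1 F2]].
    exists om'. split; [split; [exact F1|split]|split; auto].
    - intros S hS. rewrite (F2 S (omega S)). apply HE; auto.
      apply Gd_ext. apply bg_base. right; auto.
    - intros S hS. rewrite (F2 (cyl_x S) (omega (cyl_x S))). apply HE; auto.
      apply Gd_ext. apply bg_base. left. exists S; split; auto. tauto.
    - apply F2. apply Gd_d; auto. }
  set (S := cyl_y phi : Z -> Prop).
  assert (DS : D S) by (apply (Ldef_ren L U (Fin.t m) (Fin.t n + Fin.t m) inr); auto).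
  assert (HS : omega S = nu phi) by (apply W2; auto).
  assert (O1 : out Z C omega S = nu phi).
  { destruct (Hext S DS) as [om' [h1 [h2 h3]]]. rewrite <- h2. apply W2; auto. }
  assert (O2 : out Z C omega (sC Z S) = 1 - nu phi).
  { assert (DcS : D (sC Z S)) by (apply HD; auto).
    destruct (Hext _ DcS) as [om' [h1 [h2 h3]]]. rewrite <- h2.
    rewrite (add_compl Z D HD om' (m_add Z D om' h3) S DS).
    destruct h3 as [_ [h4 _]]. assert (E1 : om' (sT Z) = 1) by exact h4. rewrite E1. rewrite <- (W2 om' h1 phi Hphi). reflexivity. }
  destruct (out_approx Z C HC omega HomC S (eps/2)) as [cp [k1 [k2 k3]]]. lra.
  destruct (out_approx Z C HC omega HomC (sC Z S) (eps/2)) as [cq [k4 [k5 k6]]]. lra.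
  exists (fun z => ~ cq z), cp.
  assert (Cg : C (fun z => ~ cq z)) by (apply bg_compl; auto).
  assert (G1 : omega (fun z => ~ cq z) = 1 - omega cq).
  { pose proof (add_compl Z C HC omega (m_add Z C omega HomC) cq k4) as E.
    destruct HomC as [_ [E1 _]]. assert (E2 : omega (sT Z) = 1) by exact E1. rewrite E2 in E. exact E. }
  assert (sub1 : forall c, ~ cq c -> S c).
  { intros c h. apply NNPP; intro h'. apply h, k5. exact h'. }
  assert (M1 : omega (fun z => ~ cq z) <= omega S).
  { apply (m_mono Z D HD omega HomD); auto. }
  assert (M2 : omega S <= omega cp).
  { apply (m_mono Z D HD omega HomD); auto. }
  split; [exact Cg|split; [exact k1|split; [exact sub1|split; [exact k2|]]]].
  unfold Z in *. split; [lra|split]; apply Rabs_def1; lra.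
Qed.
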